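(* Let $G$ be a finite simple connected graph of order $n\ge 3$. Then $W_3(G)\ge \frac{n-2}{2}W(G)$. Equality holds if and only if $G$ contains no three vertices $u,v,w$ such that $2\max\{d(u,v),d(u,w),d(v,w)\}<d(u,v)+d(u,w)+d(v,w)$ and every choice of three shortest paths between the three pairs $(u,v),(v,w),(w,u)$ consists of pairwise edge-disjoint paths.
   Context: $d(u,v)$ is the graph distance and $W(G)=\sum_{\{u,v\}\subseteq V}d(u,v)$ is the Wiener index. For a set $S$ of vertices, the Steiner distance $d_3(S)$ (for $|S|=3$) is the minimum number of edges of a connected subgraph (equivalently a subtree) of $G$ containing $S$, and $W_3(G)=\sum_{S\subseteq V,\,|S|=3}d_3(S)$. *)

(* Defs.v *)
From mathcomp Require Import all_boot.
Set Implicit Arguments. Unset Strict Implicit. Unset Printing Implicit Defensive.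

Section Graph.
Variables (T : finType) (e : rel T).

(* A walk from x to y : the sequence p of vertices after x, with e-steps,
   ending at y; its length (number of edges) is size p. *)
Definition is_walk (x y : T) (p : seq T) : bool := path e x p && (last x p == y).

(* Graph distance d(x,y): least k such that a walk of length k from x to y
   exists (searched in 0..#|T|-1; for a connected graph this is exact). *)
Definition dist (x y : T) : nat :=
  find (fun k => [exists p : k.-tuple T, is_walk x y p]) (iota 0 #|T|).

Definition wiener : nat :=
  \sum_(u : T) \sum_(v : T | enum_rank u < enum_rank v) dist u v.

Definition is_subgraph (X : {set T}) (F : {set {set T}}) : bool :=
  [forall f in F, [exists a, exists b,
     [&& f == [set a; b], e a b, a \in X & b \in X]]].

Definition subgraph_connected (X : {set T}) (F : {set {set T}}) : bool :=
  (X != set0) &&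
  [forall u in X, forall v in X, connect (fun a b => [set a; b] \in F) u v].

Definition steiner (S : {set T}) : nat :=
  find (fun k => [exists X : {set T}, exists F : {set {set T}},
          [&& S \subset X, is_subgraph X F, subgraph_connected X F
            & #|F| == k]])
       (iota 0 #|{set {set T}}|.+1).

Definition wiener3 : nat := \sum_(S : {set T} | #|S| == 3) steiner S.

Definition shortest_path (x y : T) (p : seq T) : Prop :=
  is_walk x y p /\ size p = dist x y.

Definition walk_edges (x : T) (p : seq T) : seq {set T} :=
  pairmap (fun a b => [set a; b]) x p.

Definition edge_disjoint (x1 : T) (p1 : seq T) (x2 : T) (p2 : seq T) : bool :=
  ~~ has (mem (walk_edges x1 p1)) (walk_edges x2 p2).

End Graph.

(* Main.v *)
Require Import Defs.
From mathcomp Require Import all_boot zify.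
Set Implicit Arguments. Unset Strict Implicit. Unset Printing Implicit Defensive.

Section W.
Variables (T : finType) (e : rel T).
Hypothesis e_sym : symmetric e.
Hypothesis e_irr : irreflexive e.
Hypothesis e_conn : forall u v : T, connect e u v.

Local Notation d := (dist e).

Lemma rev_last (x : T) p : last (last x p) (rev (belast x p)) = x.
Proof. by case: p => //= y p; rewrite rev_cons last_rcons. Qed.

Lemma walk_rev x y p : is_walk e x y p -> is_walk e y x (rev (belast x p)).
Proof.
rewrite /is_walk => /andP[pp /eqP <-]; rewrite rev_last eqxx andbT rev_path.
by rewrite (eq_path (e' := e)) // => a b; rewrite e_sym.
Qed.

Lemma walk_cat x y z p q : is_walk e x y p -> is_walk e y z q -> is_walk e x z (p ++ q).
Proof.
rewrite /is_walk => /andP[pp /eqP <-] /andP[qq /eqP <-].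
by rewrite cat_path pp qq last_cat eqxx.
Qed.

Lemma dist_le x y p : is_walk e x y p -> d x y <= size p.
Proof.
move=> w; rewrite /dist.
case: (ltnP (size p) #|T|) => h; last first.
  by apply: leq_trans (find_size _ _) _; rewrite size_iota.
have hw : [exists p0 : (size p).-tuple T, is_walk e x y p0].
  by apply/existsP; exists (in_tuple p).
rewrite leqNgt; apply/negP => H; have := before_find 0 H.
by rewrite nth_iota // add0n hw.
Qed.

Lemma dist_walk x y : exists p, is_walk e x y p /\ size p = d x y.
Proof.
have: connect e x y by [].
case/connectP => p pp ->.
case/shortenP: pp => p' pp' up' _.
have hs : size p' < #|T|.
  move/card_uniqP: up' => /= h; rewrite -ltnS -h; apply: max_card.
have hh : has (fun k => [exists p0 : k.-tuple T, is_walk e x (last x p') p0]) (iota 0 #|T|).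
  apply/hasP; exists (size p'); first by rewrite mem_iota.
  by apply/existsP; exists (in_tuple p'); rewrite /is_walk pp' /=.
have := nth_find 0 hh; rewrite nth_iota; last by rewrite -[X in _ < X](size_iota 0 #|T|) -has_find.
rewrite add0n; case/existsP => t wt; exists t; split => //; by rewrite size_tuple.
Qed.

Lemma dist_sym x y : d x y = d y x.
Proof.
have h : forall a b, d a b <= d b a.
  move=> a b; have [p [wp sp]] := dist_walk b a.
  by rewrite -sp; have := dist_le (walk_rev wp); rewrite size_rev size_belast.
by apply/eqP; rewrite eqn_leq !h.
Qed.

Lemma dist_tri x y z : d x z <= d x y + d y z.
Proof.
have [p [wp sp]] := dist_walk x y; have [q [wq sq]] := dist_walk y z.
by rewrite -sp -sq -size_cat; apply: dist_le (walk_cat wp wq).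
Qed.

Lemma dist0 x : d x x = 0.
Proof.
have h : is_walk e x x [::] by rewrite /is_walk /= eqxx.
by have := dist_le h; rewrite leqn0 => /eqP.
Qed.

Lemma dist_eq0 x y : d x y = 0 -> x = y.
Proof.
have [p [wp sp]] := dist_walk x y; rewrite -sp => /size0nil hp; move: wp.
by rewrite hp /is_walk /= => /eqP.
Qed.


Lemma set2_eq (a b c c' : T) : [set a; b] = [set c; c'] -> (a = c /\ b = c') \/ (a = c' /\ b = c).
Proof.
move=> H.
have ha : a \in [set c; c'] by rewrite -H set21.
have hb : b \in [set c; c'] by rewrite -H set22.
have hc : c \in [set a; b] by rewrite H set21.
have hd : c' \in [set a; b] by rewrite H set22.
rewrite !inE in ha hb hc hd.
case/orP: ha => /eqP ha; case/orP: hb => /eqP hb; subst; auto;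
  case/orP: hc => /eqP hc; subst; auto; case/orP: hd => /eqP hd; subst; auto.
Qed.

Lemma we_edge (R : rel T) (x : T) p f : path R x p -> f \in walk_edges x p ->
  exists a b, [/\ f = [set a; b], R a b, a \in belast x p & b \in p].
Proof.
elim: p x => [|y p IH] x //= /andP[Rxy pp]; rewrite inE => /orP[/eqP -> | H].
  by exists x, y; rewrite Rxy mem_head !inE eqxx. 
have [a [b [-> Rab ha hb]]] := IH y pp H.
by exists a, b; rewrite Rab inE ha orbT inE hb orbT.
Qed.

Lemma we_sub (x : T) p f y : f \in walk_edges x p -> y \in f -> y \in x :: p.
Proof.
elim: p x => [|z p IH] x //=; rewrite inE => /orP[/eqP -> | H].
  by rewrite !inE => /orP[->|->] //; rewrite orbT.
by move=> hy; rewrite inE (IH z H hy) orbT.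
Qed.

Lemma we_belast (x : T) p f : f \in walk_edges x p -> exists2 y, y \in f & y \in belast x p.
Proof.
elim: p x => [|z p IH] x //=; rewrite inE => /orP[/eqP -> | H].
  by exists x; rewrite !inE eqxx.
by have [y h1 h2] := IH z H; exists y => //; rewrite inE h2 orbT.
Qed.

Lemma we_uniq (x : T) p : uniq (x :: p) -> uniq (walk_edges x p).
Proof.
elim: p x => [|z p IH] x //= /andP[hx hu]; rewrite IH // andbT.
apply/negP => /we_sub /(_ (set21 x z)) /=; by rewrite (negbTE hx).
Qed.

Lemma we_cat (x : T) p q : walk_edges x (p ++ q) = walk_edges x p ++ walk_edges (last x p) q.
Proof. by rewrite /walk_edges pairmap_cat. Qed.

Lemma we_rev (x : T) p f : f \in walk_edges x p -> f \in walk_edges (last x p) (rev (belast x p)).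
Proof.
elim: p x => [|z p IH] x //=; rewrite rev_cons -cats1 we_cat rev_last mem_cat.
rewrite inE => /orP[/eqP -> | H].
  by rewrite /walk_edges /= inE setUC eqxx orbT.
by rewrite IH.
Qed.

Lemma we_connect (F : {set {set T}}) x p y :
  {subset walk_edges x p <= F} -> y \in x :: p ->
  connect (fun a b => [set a; b] \in F) x y.
Proof.
elim: p x => [|z p IH] x /= hs; first by rewrite inE => /eqP ->.
rewrite inE => /orP[/eqP -> // | hy].
apply: connect_trans (IH z _ hy); last by move=> f hf; apply: hs; rewrite inE hf orbT.
by apply: connect1; apply: hs; rewrite mem_head.
Qed.


Definition wit (S : {set T}) k := [exists X : {set T}, exists F : {set {set T}},
  [&& S \subset X, is_subgraph e X F, subgraph_connected X F & #|F| == k]].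

Lemma steiner_spec (S X : {set T}) (F : {set {set T}}) : S \subset X -> is_subgraph e X F -> subgraph_connected X F ->
  steiner e S <= #|F| /\ wit S (steiner e S).
Proof.
move=> h1 h2 h3.
have -> : steiner e S = find (wit S) (iota 0 #|{set {set T}}|.+1) by [].
have hw : wit S #|F| by apply/existsP; exists X; apply/existsP; exists F; rewrite h1 h2 h3 eqxx.
have hlt : #|F| < #|{set {set T}}|.+1.
  rewrite ltnS; apply: leq_trans (max_card F) _; exact: (@leq_card _ _ (@set1 _) (@set1_inj {set T})).
have hh : has (wit S) (iota 0 #|{set {set T}}|.+1).
  by apply/hasP; exists #|F|; rewrite ?mem_iota //.
split.
  rewrite leqNgt; apply/negP => H; have := before_find 0 H.
  by rewrite nth_iota // add0n hw.
have := nth_find 0 hh; rewrite nth_iota ?add0n //.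
by rewrite -[X in _ < X](size_iota 0 #|{set {set T}}|.+1) -has_find.
Qed.

Lemma steiner_ub x u v w p1 p2 p3 : is_walk e x u p1 -> is_walk e x v p2 -> is_walk e x w p3 ->
  steiner e (u |: [set v; w]) <= size p1 + size p2 + size p3 /\ wit (u |: [set v; w]) (steiner e (u |: [set v; w])).
Proof.
move=> w1 w2 w3.
pose X := [set y in x :: (p1 ++ p2 ++ p3)].
pose L := walk_edges x p1 ++ walk_edges x p2 ++ walk_edges x p3.
pose F := [set f in L].
have hX : forall i (p : seq T), i \in x :: p -> {subset p <= p1 ++ p2 ++ p3} -> i \in X.
  move=> i p; rewrite inE => /orP[/eqP -> _| hi hs]; first by rewrite inE mem_head.
  by rewrite inE inE (hs _ hi) orbT.
have sub1 : {subset p1 <= p1 ++ p2 ++ p3} by move=> i hi; rewrite mem_cat hi.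
have sub2 : {subset p2 <= p1 ++ p2 ++ p3} by move=> i hi; rewrite !mem_cat hi orbT.
have sub3 : {subset p3 <= p1 ++ p2 ++ p3} by move=> i hi; rewrite !mem_cat hi !orbT.
have hS : u |: [set v; w] \subset X.
  apply/subsetP => i hi.
  have : (i == u) || (i == v) || (i == w) by move: hi; rewrite !inE orbA.
  case/orP => [/orP[] |] /eqP ->.
  - by move: w1 => /andP[_ /eqP <-]; apply: (hX _ p1 _ sub1); exact: mem_last.
  - by move: w2 => /andP[_ /eqP <-]; apply: (hX _ p2 _ sub2); exact: mem_last.
  - by move: w3 => /andP[_ /eqP <-]; apply: (hX _ p3 _ sub3); exact: mem_last.
have hE : forall f, f \in F -> exists a b, [&& f == [set a; b], e a b, a \in X & b \in X].
  move=> f; rewrite inE !mem_cat => /orP[H | /orP[H | H]].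
  - move: w1 => /andP[pp _]; have [a [b [-> eab ha hb]]] := we_edge pp H.
    exists a, b; rewrite eqxx eab /= (hX a p1) ?(hX b p1) //; first by rewrite inE hb orbT.
    exact: mem_belast ha.
  - move: w2 => /andP[pp _]; have [a [b [-> eab ha hb]]] := we_edge pp H.
    exists a, b; rewrite eqxx eab /= (hX a p2) ?(hX b p2) //; first by rewrite inE hb orbT.
    exact: mem_belast ha.
  - move: w3 => /andP[pp _]; have [a [b [-> eab ha hb]]] := we_edge pp H.
    exists a, b; rewrite eqxx eab /= (hX a p3) ?(hX b p3) //; first by rewrite inE hb orbT.
    exact: mem_belast ha.
have hsub : is_subgraph e X F.
  apply/forallP => f; apply/implyP => hf; have [a [b H]] := hE f hf.
  by apply/existsP; exists a; apply/existsP; exists b.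
have hcx : forall y, y \in X -> connect (fun a b => [set a; b] \in F) x y.
  move=> y; rewrite inE inE mem_cat mem_cat => /orP[/eqP ->|/orP[H|/orP[H|H]]] //.
  - apply: (@we_connect F x p1); last by rewrite inE H orbT.
    by move=> f hf; rewrite inE mem_cat hf.
  - apply: (@we_connect F x p2); last by rewrite inE H orbT.
    by move=> f hf; rewrite inE !mem_cat hf orbT.
  - apply: (@we_connect F x p3); last by rewrite inE H orbT.
    by move=> f hf; rewrite inE !mem_cat hf !orbT.
have hsym : symmetric (fun a b => [set a; b] \in F) by move=> a b /=; rewrite setUC.
have hcon : subgraph_connected X F.
  apply/andP; split.
    by apply/set0Pn; exists x; rewrite inE mem_head.
  apply/forallP => y; apply/implyP => hy; apply/forallP => z; apply/implyP => hz.
  apply: connect_trans (hcx z hz); rewrite (sym_connect_sym hsym); exact: hcx.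
have [h hw] := steiner_spec hS hsub hcon.
split => //; apply: leq_trans h _; rewrite cardsE; apply: leq_trans (card_size _) _.
by rewrite !size_cat !size_pairmap addnA.
Qed.


Lemma first_hit (A : seq T) (w : T) q : last w q \in A ->
  exists q1 q2, [/\ q = q1 ++ q2, last w q1 \in A & ~~ has (mem A) (belast w q1)].
Proof.
elim: q w => [|z q IH] w /=.
  by move=> h; exists [::], [::].
case hw: (w \in A) => h.
  by exists [::], (z :: q).
have [q1 [q2 [-> h1 h2]]] := IH z h.
by exists (z :: q1), q2; rewrite /= hw h2.
Qed.

Lemma steiner_lb u v w : exists x, d x u + d x v + d x w <= steiner e (u |: [set v; w]).
Proof.
have [pv [wv _]] := dist_walk u v; have [pw [ww _]] := dist_walk u w.
have w0 : is_walk e u u [::] by rewrite /is_walk /= eqxx.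
have [_ hw] := steiner_ub w0 wv ww.
move: hw; set k := steiner e _ => hw.
case/existsP: hw => X /existsP [F /and4P[hS hsub hcon /eqP hk]].
pose R := fun a b => [set a; b] \in F.
have Re : forall a b, R a b -> e a b.
  move=> a b hab; move/forallP: hsub => /(_ [set a; b]); rewrite /R in hab; rewrite hab /=.
  case/existsP => a' /existsP [b' /and4P[/eqP hs eab _ _]].
  by case: (set2_eq hs) => [[-> ->]|[-> ->]] //; rewrite e_sym.
have hu : u \in X by apply: (subsetP hS); rewrite !inE eqxx.
have hv : v \in X by apply: (subsetP hS); rewrite !inE eqxx orbT.
have hwX : w \in X by apply: (subsetP hS); rewrite !inE eqxx !orbT.
case/andP: hcon => _ /forallP hc.
have cuv : connect R u v by move: (hc u) => /implyP/(_ hu)/forallP/(_ v)/implyP/(_ hv).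
have cwu : connect R w u by move: (hc w) => /implyP/(_ hwX)/forallP/(_ u)/implyP/(_ hu).
case/connectP: cuv => p0 pp0 lp0; move: lp0.
case/shortenP: pp0 => p pp up _ lp.
case/connectP: cwu => q0 pq0 lq0; move: lq0.
case/shortenP: pq0 => q pq uq _ lq.
have hl : last w q \in u :: p by rewrite -lq mem_head.
have [q1 [q2 [eq hx hnh]]] := first_hit hl.
subst q.
move: pq; rewrite cat_path => /andP[pq1 _].
move: uq; rewrite -cat_cons cat_uniq => /andP[uq1 _].
have hsz : size p + size q1 <= k.
  rewrite -hk cardE -(size_pairmap (fun a b => [set a; b]) u p) -(size_pairmap (fun a b => [set a; b]) w q1).
  rewrite -size_cat; apply: uniq_leq_size.
    rewrite cat_uniq (we_uniq up) (we_uniq uq1) andbT /=.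
    apply/hasP => [[f hf1 hf2]].
    have [y hy1 hy2] := we_belast hf1.
    have := we_sub hf2 hy1 => hy; move/hasP: hnh; apply; by exists y.
  move=> f; rewrite mem_enum mem_cat => /orP[] hf.
    by have [a [b [-> ? _ _]]] := we_edge pp hf.
  by have [a [b [-> ? _ _]]] := we_edge pq1 hf.
exists (last w q1).
move: hsz hx; set x := last w q1 => hsz hx.
case/splitPl: hx lp hsz pp => p1 p2 hl1 lp hsz pp.
move: pp; rewrite cat_path hl1 => /andP[pp1 pp2].
have w1 : is_walk e u x p1 by rewrite /is_walk hl1 eqxx (sub_path Re pp1).
have w2 : is_walk e x v p2 by rewrite /is_walk lp last_cat hl1 eqxx (sub_path Re pp2).
have w3 : is_walk e w x q1 by rewrite /is_walk eqxx (sub_path Re pq1).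
have h1 := dist_le w1; have h2 := dist_le w2; have h3 := dist_le w3.
rewrite (dist_sym x u) (dist_sym x w); rewrite size_cat in hsz.
apply: leq_trans hsz; apply: leq_add => //; exact: leq_add.
Qed.


Definition D x u v w := d x u + d x v + d x w.
Definition sm u v w := d u v + d u w + d v w.
Definition badb u v w := [forall x, sm u v w < 2 * D x u v w].

Lemma ar1 a b c xa xb xc : a <= xa + xb -> b <= xa + xc -> c <= xb + xc -> a + b + c <= 2*(xa+xb+xc).
Proof. lia. Qed.

Lemma tri_D x u v w : sm u v w <= 2 * D x u v w.
Proof.
rewrite /sm /D; apply: ar1.
- by rewrite (dist_sym x u); apply: dist_tri.
- by rewrite (dist_sym x u); apply: dist_tri.
- by rewrite (dist_sym x v); apply: dist_tri.
Qed.

Lemma walk_D x u v w : steiner e (u |: [set v; w]) <= D x u v w.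
Proof.
have [p1 [w1 s1]] := dist_walk x u; have [p2 [w2 s2]] := dist_walk x v.
have [p3 [w3 s3]] := dist_walk x w.
by have [h _] := steiner_ub w1 w2 w3; rewrite /D -s1 -s2 -s3.
Qed.

Lemma steiner_ge u v w : sm u v w <= 2 * steiner e (u |: [set v; w]).
Proof.
have [x hx] := steiner_lb u v w.
apply: leq_trans (tri_D x u v w) _; by rewrite leq_mul2l hx orbT.
Qed.

Lemma steiner_good u v w : (exists x, 2 * D x u v w <= sm u v w) ->
  2 * steiner e (u |: [set v; w]) = sm u v w.
Proof.
case=> x hx; apply/eqP; rewrite eqn_leq steiner_ge andbT.
apply: leq_trans hx; by rewrite leq_mul2l walk_D orbT.
Qed.

Lemma steiner_median u v w : 2 * steiner e (u |: [set v; w]) <= sm u v w ->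
  exists x, 2 * D x u v w <= sm u v w.
Proof.
have [x hx] := steiner_lb u v w => h; exists x.
apply: leq_trans h; by rewrite leq_mul2l hx orbT.
Qed.

Lemma ar2 duv duw dvw xu xv xw :
  duv <= xu + xv -> duw <= xu + xw -> dvw <= xv + xw ->
  2 * (xu + xv + xw) <= duv + duw + dvw ->
  2 * maxn duv (maxn duw dvw) < duv + duw + dvw ->
  [/\ duv = xu + xv, duw = xu + xw, dvw = xv + xw & 0 < xu].
Proof. move=> *; split; lia. Qed.

Lemma median_shared u v w x : 2 * D x u v w <= sm u v w ->
  2 * maxn (d u v) (maxn (d u w) (d v w)) < d u v + d u w + d v w ->
  exists p1 p2 p3, [/\ shortest_path e u v p1, shortest_path e v w p2,
     shortest_path e w u p3 & ~~ edge_disjoint u p1 w p3].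
Proof.
move=> h1 h2.
have t1 : d u v <= d x u + d x v by rewrite (dist_sym x u); apply: dist_tri.
have t2 : d u w <= d x u + d x w by rewrite (dist_sym x u); apply: dist_tri.
have t3 : d v w <= d x v + d x w by rewrite (dist_sym x v); apply: dist_tri.
have [e1 e2 e3 pos] := ar2 t1 t2 t3 h1 h2.
have [g1 [wg1 sg1]] := dist_walk u x; have [g2 [wg2 sg2]] := dist_walk x v.
have [g3 [wg3 sg3]] := dist_walk w x; have [p2 [wp2 sp2]] := dist_walk v w.
exists (g1 ++ g2), p2, (g3 ++ rev (belast u g1)); split.
- split; first exact: walk_cat wg1 wg2.
  by rewrite size_cat sg1 sg2 e1 dist_sym.
- by [].
- split; first exact: walk_cat wg3 (walk_rev wg1).
  by rewrite size_cat size_rev size_belast sg1 sg3 (dist_sym w u) e2 (dist_sym w x) (dist_sym u x) addnC.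
case: g1 wg1 sg1 => [|y g1] wg1 sg1; first by move: pos; rewrite (dist_sym x u) -sg1.
rewrite /edge_disjoint negbK; apply/hasP; exists [set u; y]; last first.
  by rewrite /walk_edges /= inE eqxx.
rewrite we_cat mem_cat; apply/orP; right.
have -> : last w g3 = last u (y :: g1).
  by move: wg3 wg1; rewrite /is_walk => /andP[_ /eqP ->] /andP[_ /eqP ->].
by apply: we_rev; rewrite /walk_edges /= inE eqxx.
Qed.


Lemma ar3 x y p1 p2 z : x <= p1 -> y <= p2 -> z = p1 + p2 -> z <= x + y -> x + y = z.
Proof. lia. Qed.

Lemma geo_vertex a c p y : shortest_path e a c p -> y \in a :: p -> d a y + d y c = d a c.
Proof.
case=> wp sp hy; case/splitPl: hy wp sp => p1 p2 hl wp sp.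
move: wp; rewrite /is_walk cat_path last_cat hl => /andP[/andP[pp1 pp2] hc].
have w1 : is_walk e a y p1 by rewrite /is_walk pp1 hl eqxx.
have w2 : is_walk e y c p2 by rewrite /is_walk pp2 hc.
apply: ar3 (dist_le w1) (dist_le w2) _ (dist_tri _ _ _).
by rewrite -sp size_cat.
Qed.

Lemma ed_sym (a : T) p b q : edge_disjoint a p b q = edge_disjoint b q a p.
Proof. by rewrite /edge_disjoint has_sym. Qed.

Lemma shared_edge a c dd p q : shortest_path e a c p -> shortest_path e c dd q ->
  ~~ edge_disjoint a p c q ->
  exists b, [/\ b != c, d a b + d b c = d a c & d c b + d b dd = d c dd].
Proof.
move=> gp gq; rewrite /edge_disjoint negbK => /hasP [f hfq hfp].
have pq : path e c q by case: gq => /andP[].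
have [y [z [hf eyz hy hz]]] := we_edge pq hfq.
pose b := if y == c then z else y.
have hbc : b != c.
  rewrite /b; case: (y =P c) => [hyc|hyc]; last by apply/eqP.
  by apply/eqP => hzc; move: eyz; rewrite hyc hzc e_irr.
have hbf : b \in f by rewrite hf /b; case: ifP => _; rewrite !inE eqxx ?orbT.
have hbq : b \in c :: q.
  rewrite /b; case: ifP => _; first by rewrite inE hz orbT.
  exact: mem_belast hy.
have hbp : b \in a :: p by apply: we_sub hfp hbf.
exists b; split => //; first exact: geo_vertex gp hbp.
exact: geo_vertex gq hbq.
Qed.

Lemma sm_rot u v w : sm v w u = sm u v w.
Proof. rewrite /sm (dist_sym v u) (dist_sym w u); lia. Qed.

Lemma bad_rot u v w : badb u v w -> badb v w u.
Proof.
move/forallP => hb; apply/forallP => x; rewrite sm_rot.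
have ee : D x v w u = D x u v w by rewrite /D; lia.
by rewrite ee; apply: hb.
Qed.

Lemma ar_red ab bc ac cdd bdd add xa xb xc xdd :
  ab + bc = ac -> bc + bdd = cdd -> 0 < bc ->
  ac + add + cdd < 2 * (xa + xc + xdd) -> xc <= xb + bc ->
  2 * (xa + xb + xdd) <= ab + add + bdd -> False.
Proof. lia. Qed.

Lemma ar_red2 ab bc ac cdd bdd add :
  ab + bc = ac -> bc + bdd = cdd -> 0 < bc -> ab + add + bdd < ac + add + cdd.
Proof. lia. Qed.

Lemma reduce a c dd b : badb a c dd -> b != c -> d a b + d b c = d a c ->
  d c b + d b dd = d c dd -> badb a b dd && (sm a b dd < sm a c dd).
Proof.
move=> hb hbc e1 e2.
have pos : 0 < d b c.
  rewrite lt0n; apply/eqP => /dist_eq0 h; by rewrite h eqxx in hbc.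
rewrite (dist_sym c b) in e2.
apply/andP; split; last by rewrite /sm; apply: ar_red2 e1 e2 pos.
case hb' : (badb a b dd) => //; exfalso.
move/negbT: hb'; rewrite negb_forall => /existsP [x hx]; rewrite -leqNgt in hx.
have := forallP hb x; rewrite /sm /D => h.
apply: ar_red e1 e2 pos h (_ : d x c <= d x b + d b c) hx.
exact: dist_tri.
Qed.

Definition Wit u v w := 2 * maxn (d u v) (maxn (d u w) (d v w))
          < d u v + d u w + d v w /\
        (forall p1 p2 p3 : seq T,
           shortest_path e u v p1 -> shortest_path e v w p2 ->
           shortest_path e w u p3 ->
           [/\ edge_disjoint u p1 v p2, edge_disjoint v p2 w p3
             & edge_disjoint u p1 w p3]).

Lemma ar_base uv uw vw : uv + uw + vw <= 0 -> uv + uw + vw < 2 * (0 + uv + uw) -> False.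
Proof. lia. Qed.

Lemma ar4 uv uw vw : uv + uw + vw < 2 * (0 + uv + uw) -> uv + uw + vw < 2 * (uv + 0 + vw) ->
  uv + uw + vw < 2 * (uw + vw + 0) -> 2 * maxn uv (maxn uw vw) < uv + uw + vw.
Proof. lia. Qed.

Lemma no_bad (H : ~ exists u v w, Wit u v w) N : forall u v w, sm u v w <= N -> badb u v w -> False.
Proof.
elim: N => [|N IH] u v w hN hb.
  have := forallP hb u; rewrite /D dist0; exact: ar_base hN.
apply: H; exists u, v, w; rewrite /Wit; split.
  have h1 := forallP hb u; have h2 := forallP hb v; have h3 := forallP hb w.
  move: h1 h2 h3; rewrite /sm /D !dist0 (dist_sym v u) (dist_sym w u) (dist_sym w v).
  exact: ar4.
move=> p1 p2 p3 g1 g2 g3; split.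
- apply: contraT => sh; exfalso.
  have [b [hbc e1 e2]] := shared_edge g1 g2 sh.
  case/andP: (reduce hb hbc e1 e2) => hb' hlt.
  by apply: (IH u b w) hb'; rewrite -ltnS; apply: leq_trans hlt hN.
- apply: contraT => sh; exfalso.
  have [b [hbc e1 e2]] := shared_edge g2 g3 sh.
  case/andP: (reduce (bad_rot hb) hbc e1 e2) => hb' hlt.
  by apply: (IH v b u) hb'; rewrite -ltnS; apply: leq_trans hlt _; rewrite sm_rot.
- rewrite ed_sym; apply: contraT => sh; exfalso.
  have [b [hbc e1 e2]] := shared_edge g3 g1 sh.
  case/andP: (reduce (bad_rot (bad_rot hb)) hbc e1 e2) => hb' hlt.
  by apply: (IH w b v) hb'; rewrite -ltnS; apply: leq_trans hlt _; rewrite sm_rot sm_rot.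
Qed.


Lemma sum_sym : \sum_u \sum_v d u v = 2 * wiener e.
Proof.
have h2 : forall u, \sum_(v | ~~ (enum_rank u < enum_rank v)) d u v =
   \sum_(v | enum_rank v < enum_rank u) d u v.
  move=> u; rewrite (bigID (fun v => enum_rank v < enum_rank u)) /= [X in _ + X]big1 ?addn0.
    apply: eq_bigl => v; rewrite -leqNgt.
    by case: (ltnP (enum_rank v) (enum_rank u)) => h; [rewrite andbT (ltnW h) | rewrite andbF].
  move=> v /andP[h1 h3].
  have ee : (enum_rank u : nat) = enum_rank v.
    by apply/eqP; rewrite eqn_leq leqNgt h3 leqNgt h1.
  by move/val_inj/enum_rank_inj: ee => <-; rewrite dist0.
have h3 : \sum_u \sum_(v | enum_rank v < enum_rank u) d u v = wiener e.
  rewrite /wiener (exchange_big_dep predT) //=.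
  apply: eq_bigr => x _; apply: eq_big => // y _; exact: dist_sym.
rewrite mul2n -addnn -{2}h3 -big_split /=.
apply: eq_bigr => u _; rewrite (bigID (fun v => enum_rank u < enum_rank v)) /=.
by rewrite h2.
Qed.

Lemma count3 a b : a != b ->
  #|[set S : {set T} | (#|S| == 3) && (a \in S) && (b \in S)]| = #|T| - 2.
Proof.
move=> hab.
have hB : #|~: [set a; b]| = #|T| - 2.
  by rewrite -(cardsC [set a; b]) cards2 hab addKn.
rewrite -hB.
have -> : [set S : {set T} | (#|S| == 3) && (a \in S) && (b \in S)] =
          (fun c => c |: [set a; b]) @: ~: [set a; b].
  apply/setP => S; rewrite inE; apply/idP/imsetP.
    case/andP => /andP[h3 ha] hb.
    have hsub : [set a; b] \subset S by apply/subsetP => y; rewrite !inE => /orP[] /eqP ->.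
    have : #|S :\: [set a; b]| == 1 by rewrite cardsD (setIidPr hsub) cards2 hab (eqP h3).
    case/cards1P => c hc.
    have : c \in S :\: [set a; b] by rewrite hc set11.
    rewrite inE => /andP[hc1 hc2].
    exists c; first by rewrite inE.
    apply/setP => y; have : (y \in S :\: [set a; b]) = (y \in [set c]) by rewrite hc.
    rewrite !inE.
    case hy: ((y == a) || (y == b)) => /=; last by rewrite orbF => ->.
    by rewrite orbT => _; case/orP: hy => /eqP ->.
  case=> c; rewrite inE => hc ->.
  by rewrite cardsU1 hc cards2 hab !inE !eqxx !orbT.
rewrite card_in_imset // => c c'; rewrite !inE => hc hc' /setP /(_ c).
rewrite !inE eqxx /= => /esym; case: (c =P c') => // _ /=.
by move/negbTE: hc => ->.
Qed.

Lemma sum_const_set (P : pred {set T}) c : \sum_(S | P S) c = #|[set S | P S]| * c.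
Proof. by rewrite -sum_nat_const; apply: eq_bigl => S; rewrite inE. Qed.

Lemma ps_sum : \sum_(S : {set T} | #|S| == 3) \sum_(a in S) \sum_(b in S) d a b
  = (#|T| - 2) * \sum_a \sum_b d a b.
Proof.
rewrite (exchange_big_dep predT) //= big_distrr /=; apply: eq_bigr => a _.
rewrite (exchange_big_dep predT) //= big_distrr /=; apply: eq_bigr => b _.
rewrite sum_const_set; case: (eqVneq a b) => [->|hab]; first by rewrite dist0 !muln0.
by rewrite count3.
Qed.

Lemma sum3 (G : T -> nat) u v w : u \notin [set v; w] -> v != w ->
  \sum_(a in u |: [set v; w]) G a = G u + G v + G w.
Proof.
move=> hu hvw; rewrite big_setU1 // big_setU1 ?big_set1 /=; first by rewrite addnA.
by rewrite inE.
Qed.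

Lemma ps3 u v w : u \notin [set v; w] -> v != w ->
  \sum_(a in u |: [set v; w]) \sum_(b in u |: [set v; w]) d a b = 2 * sm u v w.
Proof.
move=> hu hvw; rewrite !(sum3 _ hu hvw) /sm !dist0 (dist_sym v u) (dist_sym w u) (dist_sym w v).
lia.
Qed.

Lemma card3 (S : {set T}) : #|S| == 3 ->
  exists u v w, [/\ u \notin [set v; w], v != w & S = u |: [set v; w]].
Proof.
move=> h3; have : 0 < #|S| by rewrite (eqP h3).
case/card_gt0P => u hu.
have : #|S :\ u| == 2 by move: h3; rewrite (cardsD1 u) hu.
case/cards2P => v [w [hvw hS']].
by exists u, v, w; split => //; rewrite -hS' ?setD11 ?setD1K.
Qed.

Lemma card3' (u v w : T) : u \notin [set v; w] -> v != w -> #|u |: [set v; w]| == 3.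
Proof. by move=> hu hvw; rewrite cardsU1 hu cards2 hvw. Qed.


Lemma ar8 a b c : (a * (2 * b) == 4 * c) = (2 * c == a * b).
Proof.
rewrite mulnCA -[4]/(2 * 2) -mulnA eqn_mul2l /=; by rewrite eq_sym.
Qed.

Lemma ar9 a b c : a * (2 * b) <= 4 * c -> a * b <= 2 * c.
Proof. by rewrite mulnCA -[4]/(2 * 2) -mulnA leq_mul2l. Qed.

Lemma ar10 s t : 2 * s <= 2 * (2 * t) -> 2 * s <= 4 * t.
Proof. by rewrite mulnA. Qed.

Lemma ar11 x : ~ (2 * maxn 0 (maxn x x) < 0 + x + x).
Proof. lia. Qed.
Lemma ar13 x : ~ (2 * maxn x (maxn 0 x) < x + 0 + x).
Proof. lia. Qed.
Lemma ar14 x : ~ (2 * maxn x (maxn x 0) < x + x + 0).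
Proof. lia. Qed.

Lemma main (hn : 3 <= #|T|) : (#|T| - 2) * wiener e <= 2 * wiener3 e /\
  (2 * wiener3 e = (#|T| - 2) * wiener e <-> ~ exists u v w, Wit u v w).
Proof.
pose PS (S : {set T}) := \sum_(a in S) \sum_(b in S) d a b.
have hle : forall S : {set T}, #|S| == 3 ->
    PS S <= 4 * steiner e S ?= iff (PS S == 4 * steiner e S).
  move=> S h3; apply: leqif_eq; have [u [v [w [hu hvw ->]]]] := card3 h3.
  rewrite /PS ps3 //; apply: ar10; rewrite leq_mul2l; apply/orP; right.
  exact: steiner_ge.
have key := leqif_sum hle.
have e1 : \sum_(S : {set T} | #|S| == 3) PS S = (#|T| - 2) * (2 * wiener e).
  by rewrite /PS ps_sum sum_sym.
have e2 : \sum_(S : {set T} | #|S| == 3) 4 * steiner e S = 4 * wiener3 e.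
  by rewrite /wiener3 big_distrr.
move: key; rewrite e1 e2 => key.
split; first exact: ar9 (leq_of_leqif key).
split.
- move=> heq [u [v [w [hmax hdis]]]].
  have huv : u != v.
    apply/eqP => huv; move: hmax; rewrite huv dist0; exact: ar11.
  have huw : u != w.
    apply/eqP => huw; move: hmax; rewrite huw dist0 (dist_sym v w).
    exact: ar13.
  have hvw : v != w.
    apply/eqP => hvw; move: hmax; rewrite hvw dist0; exact: ar14.
  have hu : u \notin [set v; w] by rewrite !inE negb_or huv huw.
  have hall : [forall (S : {set T} | #|S| == 3), PS S == 4 * steiner e S].
    by rewrite -(eq_leqif key) ar8 heq.
  move/forallP: hall => /(_ (u |: [set v; w])) /implyP /(_ (card3' hu hvw)).
  rewrite /PS ps3 // -[4]/(2 * 2) -mulnA eqn_mul2l /= => /eqP hst.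
  have hle2 : 2 * steiner e (u |: [set v; w]) <= sm u v w by rewrite hst.
  have [x hx] := steiner_median hle2.
  have [p1 [p2 [p3 [g1 g2 g3 hne]]]] := median_shared hx hmax.
  have [_ _ hd] := hdis p1 p2 p3 g1 g2 g3.
  by rewrite hd in hne.
- move=> hno.
  have hall : [forall (S : {set T} | #|S| == 3), PS S == 4 * steiner e S].
    apply/forallP => S; apply/implyP => h3.
    have [u [v [w [hu hvw ->]]]] := card3 h3.
    rewrite /PS ps3 // -[4]/(2 * 2) -mulnA eqn_mul2l /=.
    case hb: (badb u v w).
      by exfalso; apply: (no_bad hno (leqnn _) hb).
    move/negbT: hb; rewrite negb_forall => /existsP [x hx]; rewrite -leqNgt in hx.
    by rewrite (steiner_good (ex_intro _ x hx)).
  move: (eq_leqif key); rewrite hall ar8 => /eqP.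
  done.
Qed.

End W.

Theorem theorem4 (T : finType) (e : rel T)
  (e_sym : symmetric e) (e_irr : irreflexive e)
  (e_conn : forall u v : T, connect e u v)
  (hn : 3 <= #|T|) :
  (#|T| - 2) * wiener e <= 2 * wiener3 e /\
  (2 * wiener3 e = (#|T| - 2) * wiener e <->
   ~ (exists u v w : T,
        2 * maxn (dist e u v) (maxn (dist e u w) (dist e v w))
          < dist e u v + dist e u w + dist e v w /\
        (forall p1 p2 p3 : seq T,
           shortest_path e u v p1 -> shortest_path e v w p2 ->
           shortest_path e w u p3 ->
           [/\ edge_disjoint u p1 v p2, edge_disjoint v p2 w p3
             & edge_disjoint u p1 w p3]))).
Proof. exact: (main e_sym e_irr e_conn hn). Qed.
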